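(* Consider the weighted stochastic block model: there are $r$ latent communities labelled $1,\ldots,r$; each node $i$ is independently assigned a latent community $Z_i$ with $\mathbb{P}(Z_i=z)=p_z>0$ for $z=1,\ldots,r$ (so $\boldsymbol{p}=(p_1,\ldots,p_r)'$ sums to one); each unordered pair of distinct nodes $i\neq j$ carries a real-valued edge weight $X_{i,j}=X_{j,i}$, where, conditional on the community indicators, the edge weights are independent and $X_{i,j}$ has distribution function $F_{z_1,z_2}(x)=\mathbb{P}(X_{i,j}\le x\mid Z_i=z_1,Z_j=z_2)$. Let $F_z(x):=\mathbb{P}(X_{i,j}\le x\mid Z_i=z)=\sum_{z'=1}^r F_{z,z'}(x)\,p_{z'}$. Suppose that the functions $F_1,\ldots,F_r$ are linearly independent. Then: (i) The number of communities $r$ is nonparametrically recoverable (uniquely determined) from the joint distribution of the edge weights $(X_{1,2},X_{1,3})$ of a two-star subgraph on three distinct nodes $1,2,3$ (edges $\{1,2\},\{1,3\}$). (ii) The community distribution $\boldsymbol{p}$, as well as, for a given function $\varphi$, the conditional expectations $$\varphi_{z_1,z_2}:=\mathbb{E}(\varphi(X_{i,j})\mid Z_i=z_1,Z_j=z_2),\qquad 1\le z_1,z_2\le r,$$ are nonparametrically recoverable (uniquely determined up to a common relabeling of the latent communities) from the joint distribution of the edge weights $(X_{1,2},X_{1,3},X_{1,4})$ of a three-star subgraph on four distinct nodes and the joint distribution of the edge weights $(X_{1,2},X_{1,3},X_{3,4})$ of a path subgraph on four distinct nodes $1,2,3,4$.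
   Context: ''Nonparametrically recoverable'' means that the quantity is uniquely determined by the indicated distribution of observed edge weights, without any parametric restrictions on the distributions $F_{z_1,z_2}$, among all weighted stochastic block models satisfying the stated assumptions; ''up to relabeling'' means up to a single permutation of the community labels $1,\ldots,r$ applied simultaneously to all components. *)

(* Defs.v *)
From HB Require Import structures.
From mathcomp Require Import all_boot all_order all_algebra.
From mathcomp Require Import all_classical all_reals all_analysis.
Set Implicit Arguments. Unset Strict Implicit. Unset Printing Implicit Defensive.
Import Order.TTheory GRing.Theory Num.Theory.
Local Open Scope classical_set_scope.
Local Open Scope ring_scope.

(* Parameters of a weighted stochastic block model with r communities:
   p : community probabilities, F z1 z2 : law (a probability on R) of an edge
   weight X_{i,j} given Z_i = z1, Z_j = z2. *)

Definition edge_cdf (R : realType) (r : nat)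
  (F : 'I_r -> 'I_r -> probability R R) (z1 z2 : 'I_r) (x : R) : R :=
  fine (F z1 z2 `]-oo, x]%classic).

Definition wsbm (R : realType) (r : nat) (p : 'I_r -> R)
  (F : 'I_r -> 'I_r -> probability R R) : Prop :=
  (forall z, 0 < p z) /\ (\sum_(z < r) p z = 1) /\
  (* X_{i,j} = X_{j,i} forces F_{z1,z2} = F_{z2,z1} *)
  (forall z1 z2, F z1 z2 = F z2 z1).

Definition node_cdf (R : realType) (r : nat) (p : 'I_r -> R)
  (F : 'I_r -> 'I_r -> probability R R) (z : 'I_r) (x : R) : R :=
  \sum_(z' < r) edge_cdf F z z' x * p z'.

Definition Fz_lin_indep (R : realType) (r : nat) (p : 'I_r -> R)
  (F : 'I_r -> 'I_r -> probability R R) : Prop :=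
  forall c : 'I_r -> R,
    (forall x : R, \sum_(z < r) c z * node_cdf p F z x = 0) ->
    forall z, c z = 0.

(* Joint distribution function of (X_{1,2}, X_{1,3}) (two-star). *)
Definition twostar_cdf (R : realType) (r : nat) (p : 'I_r -> R)
  (F : 'I_r -> 'I_r -> probability R R) (x2 x3 : R) : R :=
  \sum_(z1 < r) \sum_(z2 < r) \sum_(z3 < r)
     p z1 * p z2 * p z3 * (edge_cdf F z1 z2 x2 * edge_cdf F z1 z3 x3).

(* Joint distribution function of (X_{1,2}, X_{1,3}, X_{1,4}) (three-star). *)
Definition threestar_cdf (R : realType) (r : nat) (p : 'I_r -> R)
  (F : 'I_r -> 'I_r -> probability R R) (x2 x3 x4 : R) : R :=
  \sum_(z1 < r) \sum_(z2 < r) \sum_(z3 < r) \sum_(z4 < r)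
     p z1 * p z2 * p z3 * p z4 *
     (edge_cdf F z1 z2 x2 * edge_cdf F z1 z3 x3 * edge_cdf F z1 z4 x4).

(* Joint distribution function of (X_{1,2}, X_{1,3}, X_{3,4}) (path). *)
Definition path_cdf (R : realType) (r : nat) (p : 'I_r -> R)
  (F : 'I_r -> 'I_r -> probability R R) (x12 x13 x34 : R) : R :=
  \sum_(z1 < r) \sum_(z2 < r) \sum_(z3 < r) \sum_(z4 < r)
     p z1 * p z2 * p z3 * p z4 *
     (edge_cdf F z1 z2 x12 * edge_cdf F z1 z3 x13 * edge_cdf F z3 z4 x34).

Definition cond_exp (R : realType) (r : nat)
  (F : 'I_r -> 'I_r -> probability R R) (phi : R -> R) (z1 z2 : 'I_r)
  : \bar R :=
  (\int[F z1 z2]_x (phi x)%:E)%E.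

(* Main.v *)
Require Import Defs.
From HB Require Import structures.
From mathcomp Require Import all_boot all_order all_algebra.
From mathcomp Require Import all_classical all_reals all_analysis.
From mathcomp Require Import ring.
Import Order.TTheory GRing.Theory Num.Theory.
Import numFieldNormedType.Exports.
Local Open Scope classical_set_scope.
Local Open Scope ring_scope.
Set Implicit Arguments. Unset Strict Implicit. Unset Printing Implicit Defensive.

Section Alg.
Variable R : realType.

Definition linind n (f : 'I_n -> R -> R) := forall c : 'I_n -> R,
  (forall x, \sum_(z < n) c z * f z x = 0) -> forall z, c z = 0.

Definition linfun (L : (R -> R) -> R) := forall k h1 h2,
  L (fun x => k * h1 x + h2 x) = k * L h1 + L h2.

Lemma linfun0 L : linfun L -> L (fun _ => 0) = 0.
Proof.
move=> HL; have := HL 1 (fun _ => 0) (fun _ => 0).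
have -> : (fun _ : R => 1 * 0 + 0) = (fun _ => 0 : R).
  by apply/funext => x; rewrite mulr0 addr0.
rewrite mul1r => h; apply: (addrI (L (fun _ => 0))).
by rewrite addr0 -h.
Qed.

Lemma linfun_sum L n (c : 'I_n -> R) (h : 'I_n -> R -> R) : linfun L ->
  L (fun x => \sum_(i < n) c i * h i x) = \sum_(i < n) c i * L (h i).
Proof.
move=> HL; elim: n c h => [|n IH] c h.
  rewrite big_ord0.
  have -> : (fun x => \sum_(i < 0) c i * h i x) = (fun _ => 0 : R).
    by apply/funext => x; rewrite big_ord0.
  exact: linfun0.
have -> : (fun x => \sum_(i < n.+1) c i * h i x) = (fun x =>
   c ord0 * h ord0 x + \sum_(i < n) c (lift ord0 i) * h (lift ord0 i) x).
  by apply/funext => x; rewrite big_ord_recl.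
by rewrite HL IH big_ord_recl.
Qed.

Lemma sum_delta n (a : 'I_n -> R) j : \sum_(i < n) a i * (i == j)%:R = a j.
Proof.
rewrite (bigD1 j) //= eqxx mulr1 big1 ?addr0 // => i /negbTE ->.
by rewrite mulr0.
Qed.

Lemma linind_nz n (f : 'I_n -> R -> R) (z : 'I_n) : linind f -> exists y, f z y != 0.
Proof.
move=> Hf; apply/not_existsP => /(_ _) H.
have H0 : forall y, f z y = 0 by move=> y; apply/eqP/negbNE/negP/H.
suff : (fun i : 'I_n => (i == z)%:R : R) z = 0 by rewrite /= eqxx => /eqP; rewrite oner_eq0.
apply: (Hf (fun i : 'I_n => (i == z)%:R : R)) => x.
under eq_bigr do rewrite mulrC; by rewrite sum_delta H0.
Qed.

Lemma linind_inj n (f : 'I_n -> R -> R) (i j : 'I_n) : linind f -> f i = f j -> i = j.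
Proof.
move=> Hf eij; apply/eqP.
suff : (fun k : 'I_n => (k == i)%:R - (k == j)%:R : R) i = 0.
  by rewrite /= eqxx; case: (i == j) => //; rewrite subr0 => /eqP; rewrite oner_eq0.
apply: (Hf (fun k : 'I_n => (k == i)%:R - (k == j)%:R : R)) => x.
under eq_bigr do rewrite mulrBl.
rewrite sumrB; under eq_bigr do rewrite mulrC; rewrite sum_delta.
by under eq_bigr do rewrite mulrC; rewrite sum_delta eij subrr.
Qed.

Lemma dual n (f : 'I_n -> R -> R) : linind f ->
  exists L : 'I_n -> (R -> R) -> R,
    (forall z, linfun (L z)) /\ (forall z z', L z (f z') = (z == z')%:R).
Proof.
elim: n f => [|n IH] f Hf.
  by exists (fun _ _ => 0); split; case.
pose g j := f (lift ord0 j).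
have Hg : linind g.
  move=> c Hc z.
  pose c' k := if unlift ord0 k is Some j then c j else 0.
  suff : c' (lift ord0 z) = 0 by rewrite /c' liftK.
  apply: (Hf c') => x.
  rewrite big_ord_recl /c' unlift_none mul0r add0r -[RHS](Hc x).
  by apply: eq_bigr => j _; rewrite liftK.
have [Lg [HLg HLgd]] := IH g Hg.
pose mu j := Lg j (f ord0).
pose res y := f ord0 y - \sum_(j < n) mu j * g j y.
have [y0 Hy0] : exists y, res y != 0.
  apply/not_existsP => /(_ _) H.
  have H0 : forall y, res y = 0 by move=> y; apply/eqP/negbNE/negP/H.
  pose c k := if unlift ord0 k is Some j then - mu j else 1.
  suff : c ord0 = 0 by rewrite /c unlift_none => /eqP; rewrite oner_eq0.
  apply: (Hf c) => x.
  rewrite big_ord_recl /c unlift_none mul1r -[RHS](H0 x) /res.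
  rewrite -sumrN; congr (_ + _); apply: eq_bigr => j _; rewrite liftK.
  by rewrite mulNr.
pose l h := h y0 - \sum_(j < n) g j y0 * Lg j h.
have Hl : linfun l.
  move=> k h1 h2; rewrite /l.
  under eq_bigr do rewrite HLg.
  have -> : \sum_(i < n) g i y0 * (k * Lg i h1 + Lg i h2) =
    k * \sum_(i < n) g i y0 * Lg i h1 + \sum_(i < n) g i y0 * Lg i h2.
    rewrite mulr_sumr -big_split /=; apply: eq_bigr => i _; ring.
  ring.
have lg j : l (g j) = 0.
  rewrite /l; under eq_bigr do rewrite HLgd.
  by rewrite sum_delta subrr.
have lf : l (f ord0) = res y0.
  rewrite /l /res; congr (_ - _); apply: eq_bigr => j _; by rewrite mulrC.
pose L0 h := (res y0)^-1 * l h.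
have HL0 : linfun L0.
  by move=> k h1 h2; rewrite /L0 Hl; ring.
pose L k := if unlift ord0 k is Some j then (fun h => Lg j h - mu j * L0 h)
            else L0.
exists L; split.
  move=> z; rewrite /L; case: (unliftP ord0 z) => [j|] _ //.
  by move=> k h1 h2; rewrite HLg HL0; ring.
move=> z z'; rewrite /L.
case: (unliftP ord0 z) => [j|] ->; case: (unliftP ord0 z') => [j'|] ->.
- by rewrite (inj_eq lift_inj) HLgd /L0 -/(g j') lg !mulr0 subr0.
- by rewrite /L0 lf mulVf // mulr1 subrr eq_sym (negbTE (neq_lift _ _)).
- by rewrite /L0 lg mulr0 (negbTE (neq_lift _ _)).
- by rewrite /L0 lf mulVf // eqxx.
Qed.


Lemma dual_span n n' (p : 'I_n -> R) (q : 'I_n' -> R) (a : 'I_n -> R -> R)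
  (b : 'I_n' -> R -> R) (L : 'I_n -> (R -> R) -> R) :
  (forall z, linfun (L z)) -> (forall z z', L z (a z') = (z == z')%:R) ->
  (forall x y, \sum_z p z * (a z x * a z y) = \sum_w q w * (b w x * b w y)) ->
  forall z y, p z * a z y = \sum_w q w * b w y * L z (b w).
Proof.
move=> HL HLd H2 z y.
have e : (fun x => \sum_z' (p z' * a z' y) * a z' x) =
         (fun x => \sum_w (q w * b w y) * b w x).
  apply/funext => x; rewrite -[X in X = _]/(\sum_z' (p z' * a z' y) * a z' x).
  transitivity (\sum_z p z * (a z x * a z y)); first by apply: eq_bigr => i _; ring.
  by rewrite H2; apply: eq_bigr => i _; ring.
have := congr1 (L z) e; rewrite !linfun_sum //.
under eq_bigr do rewrite HLd eq_sym; rewrite sum_delta => ->.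
by [].
Qed.

Lemma core n n' (p : 'I_n -> R) (q : 'I_n' -> R) (a : 'I_n -> R -> R)
  (b : 'I_n' -> R -> R) :
  (forall z, p z != 0) -> (forall w, q w != 0) -> linind a -> linind b ->
  (forall x y, \sum_z p z * (a z x * a z y) = \sum_w q w * (b w x * b w y)) ->
  (forall x y t, \sum_z p z * (a z x * a z y * a z t) =
                 \sum_w q w * (b w x * b w y * b w t)) ->
  exists s : 'I_n -> 'I_n', forall z, b (s z) = a z /\ q (s z) = p z.
Proof.
move=> p0 q0 Ha Hb H2 H3.
have [L [HL HLd]] := dual Ha.
pose C z w := L z (b w).
have HA : forall z y, p z * a z y = \sum_w q w * b w y * C z w.
  exact: dual_span.
have HB : forall z y t, p z * a z y * a z t = \sum_w q w * b w y * b w t * C z w.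
  move=> z y t.
  have e : (fun x => \sum_z' (p z' * a z' y * a z' t) * a z' x) =
           (fun x => \sum_w (q w * b w y * b w t) * b w x).
    apply/funext => x.
    rewrite -[X in X = _]/(\sum_z' (p z' * a z' y * a z' t) * a z' x).
    transitivity (\sum_z p z * (a z x * a z y * a z t)); first by apply: eq_bigr => i _; ring.
    by rewrite H3; apply: eq_bigr => i _; ring.
  have := congr1 (L z) e; rewrite !linfun_sum //.
  by under eq_bigr do rewrite HLd eq_sym; rewrite sum_delta => ->.
have HC : forall z w, C z w != 0 -> b w = a z.
  move=> z w Czw; apply/funext => t.
  suff : q w * C z w * (a z t - b w t) = 0.
    by move/eqP; rewrite !mulf_eq0 (negbTE (q0 w)) (negbTE Czw) /= subr_eq0 => /eqP ->.
  apply: (Hb (fun w => q w * C z w * (a z t - b w t))) => y.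
  transitivity (a z t * (\sum_w q w * b w y * C z w) -
                \sum_w q w * b w y * b w t * C z w).
    by rewrite mulr_sumr -sumrB; apply: eq_bigr => i _; ring.
  by rewrite -HA -HB; ring.
have Hex : forall z, exists w, C z w != 0.
  move=> z; case: (pselect (exists w, C z w != 0)) => // Hn.
  have H0 w : C z w = 0.
    by apply/eqP/negbNE/negP => h; apply: Hn; exists w.
  have [y Hy] := linind_nz z Ha.
  have := HA z y; rewrite big1 => [|w _]; last by rewrite H0 mulr0.
  by move/eqP; rewrite mulf_eq0 (negbTE (p0 z)) (negbTE Hy).
have [s Hs] := choice Hex.
exists s => z; split; first exact: HC.
have Hu : forall w, w != s z -> C z w = 0.
  move=> w; apply: contraNeq => Cw; apply/eqP; apply: (linind_inj Hb).
  by rewrite (HC _ _ Cw) (HC _ _ (Hs z)).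
have [y Hy] := linind_nz z Ha.
have := HA z y; rewrite (bigD1 (s z)) //= big1 ?addr0 => [|w /Hu ->]; last by rewrite mulr0.
by rewrite /C (HC _ _ (Hs z)) HLd eqxx mulr1 => /(mulIf Hy) ->.
Qed.

Lemma span_mx n n' (p : 'I_n -> R) (q : 'I_n' -> R) (a : 'I_n -> R -> R)
  (b : 'I_n' -> R -> R) :
  (forall z, p z != 0) -> linind a ->
  (forall x y, \sum_z p z * (a z x * a z y) = \sum_w q w * (b w x * b w y)) ->
  exists M : 'M[R]_(n, n'), forall z y, a z y = \sum_w M z w * b w y.
Proof.
move=> p0 Ha H2.
have [L [HL HLd]] := dual Ha.
exists (\matrix_(z, w) ((p z)^-1 * (q w * L z (b w)))) => z y.
have := dual_span HL HLd H2 z y => e.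
apply: (mulfI (p0 z)); rewrite e mulr_sumr; apply: eq_bigr => w _.
rewrite mxE; field; exact: p0.
Qed.

Lemma rank_le n n' (a : 'I_n -> R -> R) (b : 'I_n' -> R -> R)
  (M : 'M[R]_(n, n')) (N : 'M[R]_(n', n)) : linind a ->
  (forall z y, a z y = \sum_w M z w * b w y) ->
  (forall w y, b w y = \sum_z N w z * a z y) -> (n <= n')%N.
Proof.
move=> Ha HM HN.
have MN : M *m N = 1%:M.
  apply/matrixP => z z'.
  pose c k := (M *m N) z k - (z == k)%:R.
  rewrite [RHS]mxE; suff : c z' = 0 by rewrite /c => /eqP; rewrite subr_eq0 => /eqP.
  apply: (Ha c) => y.
  transitivity (\sum_k (M *m N) z k * a k y - \sum_k a k y * (k == z)%:R).
    by rewrite -sumrB; apply: eq_bigr => k _; rewrite /c eq_sym; ring.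
  rewrite sum_delta (HM z y).
  transitivity (\sum_w M z w * b w y - \sum_w M z w * b w y); last by rewrite subrr.
  congr (_ - _).
  under eq_bigr do rewrite mxE mulr_suml.
  rewrite exchange_big; apply: eq_bigr => w _.
  by rewrite (HN w y) mulr_sumr; apply: eq_bigr => k _; rewrite mulrA.
have := mxrankM_maxl M N; rewrite MN mxrank1 => /leq_trans; apply.
exact: rank_leq_col.
Qed.

Lemma lin2 n (a : 'I_n -> R -> R) (D : 'I_n -> 'I_n -> R) : linind a ->
  (forall x t, \sum_i \sum_j D i j * a i x * a j t = 0) -> forall i j, D i j = 0.
Proof.
move=> Ha H.
have H1 i t : \sum_j D i j * a j t = 0.
  apply: (Ha (fun i => \sum_j D i j * a j t)) => x.
  rewrite -[RHS](H x t); apply: eq_bigr => k _; rewrite mulr_suml.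
  by apply: eq_bigr => j _; ring.
by move=> i; apply: (Ha (fun j => D i j)) => t; exact: H1.
Qed.

End Alg.

Section Prob.
Variable R : realType.

Let idTR : R -> R := idfun.
#[local] HB.instance Definition _ :=
  @isMeasurableFun.Build _ _ _ _ idTR (@measurable_id _ _ setT).

Lemma cdf_cvg1 (P : probability R R) :
  (fun x : R => fine (P `]-oo, x]%classic)) @ +oo%R --> (1 : R).
Proof. exact: (fine_cvg (cvg_cdfy1 (idTR : {RV P >-> R}))). Qed.

Lemma cvg_sumo n (f : 'I_n -> R -> R) (l : 'I_n -> R) :
  (forall i, f i x @[x --> +oo%R] --> l i) ->
  \sum_(i < n) f i x @[x --> +oo%R] --> \sum_(i < n) l i.
Proof.
elim: n f l => [|n IH] f l H.
  rewrite big_ord0; under eq_cvg do rewrite big_ord0; exact: cvg_cst.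
rewrite big_ord_recl; under eq_cvg do rewrite big_ord_recl.
apply: cvgD; first exact: H.
by apply: IH => i; exact: H.
Qed.

Lemma prob_eq (P1 P2 : probability R R) :
  (forall x, fine (P1 `]-oo, x]%classic) = fine (P2 `]-oo, x]%classic)) ->
  forall A, measurable A -> P1 A = P2 A.
Proof.
move=> H A mA.
have Hc (x : R) : P1 `]-oo, x]%classic = P2 `]-oo, x]%classic.
  by rewrite -[LHS]fineK ?fin_num_measure // -[RHS]fineK ?fin_num_measure // H.
apply: (@measure_unique _ R R (@ocitv R : set (set R)) (fun k : nat => `](- k%:R), k%:R]%classic)) => //.
- exact: ocitvI.
- by move=> k; exact: is_ocitv.
- by rewrite bigcup_itvT.
- move=> _ [[a b] _ <-] /=.
  have [ab | ba] := leP a b; last first.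
    by rewrite set_itv_ge ?measure0 // bnd_simp -leNgt ltW.
  have -> : `]a, b]%classic = `]-oo, b]%classic `\` `]-oo, a]%classic.
    by rewrite -[RHS]setCK setCD setCitvl setUC -[LHS]setCK setCitv.
  have fin (Q : probability R R) (B : set R) : measurable B -> (Q B < +oo)%E.
    by move=> mB; rewrite (le_lt_trans (probability_le1 _ mB)) ?ltry.
  rewrite !measureD ?fin //=.
  have -> : `]-oo, b] `&` `]-oo, a] = `]-oo, a]%classic.
    by apply: setIidr; apply: subset_itvl; rewrite bnd_simp.
  by rewrite !Hc.
- by move=> k; rewrite (le_lt_trans (probability_le1 _ _)) ?ltry.
Qed.

Lemma prod3 r (f g h : 'I_r -> R) c :
  c * ((\sum_i f i) * (\sum_j g j) * (\sum_k h k)) =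
  \sum_i \sum_j \sum_k c * (f i * g j * h k).
Proof.
rewrite mulr_suml mulr_suml mulr_sumr; apply: eq_bigr => i _.
rewrite [f i * _]mulr_sumr mulr_suml mulr_sumr; apply: eq_bigr => j _.
by rewrite mulr_sumr mulr_sumr; apply: eq_bigr => k _.
Qed.

Lemma prod2 r (f g : 'I_r -> R) c :
  c * ((\sum_i f i) * (\sum_j g j)) = \sum_i \sum_j c * (f i * g j).
Proof.
rewrite mulr_suml mulr_sumr; apply: eq_bigr => i _.
by rewrite mulr_sumr mulr_sumr; apply: eq_bigr => j _.
Qed.

Lemma prod2' r (f g : 'I_r -> R) c :
  c * (\sum_i f i) * (\sum_j g j) = \sum_i \sum_j c * f i * g j.
Proof.
rewrite [c * _]mulr_sumr mulr_suml; apply: eq_bigr => i _.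
by rewrite mulr_sumr; apply: eq_bigr => j _.
Qed.

Lemma twostarE r (p : 'I_r -> R) F x y : twostar_cdf p F x y =
  \sum_z p z * (node_cdf p F z x * node_cdf p F z y).
Proof.
rewrite /twostar_cdf /node_cdf; apply: eq_bigr => z1 _.
rewrite prod2; apply: eq_bigr => z2 _; apply: eq_bigr => z3 _.
ring.
Qed.

Lemma threestarE r (p : 'I_r -> R) F x y t : threestar_cdf p F x y t =
  \sum_z p z * (node_cdf p F z x * node_cdf p F z y * node_cdf p F z t).
Proof.
rewrite /threestar_cdf /node_cdf; apply: eq_bigr => z1 _.
rewrite prod3; apply: eq_bigr => z2 _; apply: eq_bigr => z3 _.
apply: eq_bigr => z4 _; ring.
Qed.

Lemma pathE r (p : 'I_r -> R) F x y t : path_cdf p F x y t =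
  \sum_z1 \sum_z3 p z1 * p z3 * edge_cdf F z1 z3 y * node_cdf p F z1 x
     * node_cdf p F z3 t.
Proof.
rewrite /path_cdf /node_cdf; apply: eq_bigr => z1 _.
rewrite [LHS]exchange_big; apply: eq_bigr => z3 _.
rewrite prod2'; apply: eq_bigr => z2 _; apply: eq_bigr => z4 _.
ring.
Qed.

Lemma node_cvg1 r (p : 'I_r -> R) F z : \sum_(z < r) p z = 1 ->
  (fun t => node_cdf p F z t) @ +oo%R --> (1 : R).
Proof.
move=> ps; rewrite -ps /node_cdf.
have -> : \sum_(z < r) p z = \sum_(z' < r) 1 * p z'.
  by apply: eq_bigr => i _; rewrite mul1r.
apply: cvg_sumo => z'; apply: cvgMr_tmp; exact: cdf_cvg1.
Qed.

End Prob.

Unset Implicit Arguments.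
Theorem theorem1 (R : realType) (phi : R -> R)
  (r : nat) (p : 'I_r -> R) (F : 'I_r -> 'I_r -> probability R R)
  (r' : nat) (p' : 'I_r' -> R) (F' : 'I_r' -> 'I_r' -> probability R R) :
  wsbm p F -> Fz_lin_indep p F ->
  wsbm p' F' -> Fz_lin_indep p' F' ->
  ((forall x2 x3, twostar_cdf p F x2 x3 = twostar_cdf p' F' x2 x3) ->
     r = r')
  /\
  (measurable_fun setT phi ->
   (forall z1 z2, (F z1 z2).-integrable setT (fun x => (phi x)%:E)) ->
   (forall z1 z2, (F' z1 z2).-integrable setT (fun x => (phi x)%:E)) ->
   (forall x2 x3 x4,
      threestar_cdf p F x2 x3 x4 = threestar_cdf p' F' x2 x3 x4) ->
   (forall x12 x13 x34,
      path_cdf p F x12 x13 x34 = path_cdf p' F' x12 x13 x34) ->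
   exists sigma : 'I_r -> 'I_r',
     bijective sigma /\
     (forall z, p' (sigma z) = p z) /\
     (forall z1 z2, cond_exp F' phi (sigma z1) (sigma z2) = cond_exp F phi z1 z2)).
Proof.
move=> [p0 [ps Fs]] Ha [q0 [qs F's]] Hb.
have Ha' : linind (node_cdf p F) := Ha.
have Hb' : linind (node_cdf p' F') := Hb.
have p0' z : p z != 0 by rewrite gt_eqF.
have q0' z : p' z != 0 by rewrite gt_eqF.
set a := node_cdf p F in Ha' *.
set b := node_cdf p' F' in Hb' *.
split.
  move=> H2.
  have E2 x y : \sum_z p z * (a z x * a z y) = \sum_w p' w * (b w x * b w y).
    by rewrite /a /b -!twostarE H2.
  have [M HM] := span_mx p0' Ha' E2.
  have [N HN] := span_mx q0' Hb' (fun x y => esym (E2 x y)).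
  by apply/eqP; rewrite eqn_leq (rank_le Ha' HM HN) (rank_le Hb' HN HM).
move=> _ _ _ H3 HP.
have E3 x y t : \sum_z p z * (a z x * a z y * a z t) =
                \sum_w p' w * (b w x * b w y * b w t).
  by rewrite /a /b -!threestarE H3.
have E2 x y : \sum_z p z * (a z x * a z y) = \sum_w p' w * (b w x * b w y).
  have L1 : (fun t => \sum_z p z * (a z x * a z y * a z t)) @ +oo%R -->
            \sum_z p z * (a z x * a z y).
    apply: cvg_sumo => z.
    have := cvgMl_tmp (a := p z) (cvgMl_tmp (a := a z x * a z y) (node_cvg1 F z ps)).
    rewrite mulr1; apply; typeclasses eauto.
  have L2 : (fun t => \sum_z p z * (a z x * a z y * a z t)) @ +oo%R -->
            \sum_w p' w * (b w x * b w y).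
    have -> : (fun t => \sum_z p z * (a z x * a z y * a z t)) =
              (fun t => \sum_w p' w * (b w x * b w y * b w t)).
      by apply/funext => t; exact: E3.
    apply: cvg_sumo => w.
    have := cvgMl_tmp (a := p' w) (cvgMl_tmp (a := b w x * b w y) (node_cvg1 F' w qs)).
    rewrite mulr1; apply; typeclasses eauto.
  exact: (cvg_unique _ L1 L2).
have [s Hs] := core p0' q0' Ha' Hb' E2 E3.
have [t Ht] := core q0' p0' Hb' Ha' (fun x y => esym (E2 x y))
                 (fun x y t => esym (E3 x y t)).
have sK : cancel s t.
  move=> z; apply: (linind_inj Ha'); rewrite (Ht (s z)).1; exact: (Hs z).1.
have tK : cancel t s.
  move=> w; apply: (linind_inj Hb'); rewrite (Hs (t w)).1; exact: (Ht w).1.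
have sbij : bijective s by exists t.
have HE z1 z3 y : edge_cdf F' (s z1) (s z3) y = edge_cdf F z1 z3 y.
  have key : forall i j, p i * p j *
      (edge_cdf F i j y - edge_cdf F' (s i) (s j) y) = 0.
    apply: (lin2 (D := fun i j => p i * p j *
      (edge_cdf F i j y - edge_cdf F' (s i) (s j) y)) Ha') => x t0.
    transitivity (\sum_i \sum_j p i * p j * edge_cdf F i j y * a i x * a j t0 -
      \sum_i \sum_j p i * p j * edge_cdf F' (s i) (s j) y * a i x * a j t0).
      by rewrite -sumrB; apply: eq_bigr => i _; rewrite -sumrB;
         apply: eq_bigr => j _; ring.
    apply/eqP; rewrite subr_eq0; apply/eqP.
    rewrite /a -pathE HP pathE -/b.
    rewrite (reindex s) /=; last exact: onW_bij.
    apply: eq_bigr => i _.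
    rewrite (reindex s) /=; last exact: onW_bij.
    apply: eq_bigr => j _.
    by rewrite (proj1 (Hs i)) (proj1 (Hs j)) (proj2 (Hs i)) (proj2 (Hs j)).
  have := key z1 z3; move/eqP; rewrite !mulf_eq0 (negbTE (p0' z1)) (negbTE (p0' z3)).
  by rewrite /= subr_eq0 => /eqP ->.
exists s; split => //; split; first by move=> z; exact: (Hs z).2.
move=> z1 z2; rewrite /cond_exp.
apply: (eq_measure_integral (F z1 z2)) => A mA _.
apply: prob_eq => // x; exact: HE.
Qed.
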